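(* Let $v$ be an aperiodic infinite word over $\{0,1\}$, with $h(\ell)$ the number of $1$'s among its first $\ell$ digits. If $$\liminf_{\ell\to\infty}\frac{h(\ell)}{\ell}>\frac{\ln2}{\ln3},$$ then $\Phi_{\mathbb{R}}(v)$ exists and $\Phi_{\mathbb{R}}(v)<-1$.
   Context: For an infinite word $v$ over $\{0,1\}$ whose $1$'s are at positions $d_0<d_1<\cdots$ (counted from $0$), $\Phi_{\mathbb{R}}(v)$ is the real sum $-\sum_{i\ge0}2^{d_i}/3^{i+1}$; it exists if the series converges in $\mathbb{R}$. Aperiodic means not eventually periodic. *)

(* Defs.v *)
From Stdlib Require Import Reals Lra Lia.
From Coquelicot Require Import Coquelicot.
Open Scope R_scope.

(* An infinite word over {0,1} is v : nat -> bool (true = digit 1), positions from 0. *)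

Fixpoint h (v : nat -> bool) (l : nat) : nat :=
  match l with
  | O => O
  | S k => (h v k + (if v k then 1 else 0))%nat
  end.

Definition eventually_periodic (v : nat -> bool) : Prop :=
  exists p N : nat, (0 < p)%nat /\ forall n, (N <= n)%nat -> v (n + p)%nat = v n.

Definition aperiodic (v : nat -> bool) : Prop := ~ eventually_periodic v.

Definition enumerates_ones (v : nat -> bool) (d : nat -> nat) : Prop :=
  (forall i, (d i < d (S i))%nat) /\ (forall n, v n = true <-> exists i, d i = n).

(* The terms of the series defining Phi_R(v): -2^{d_i}/3^{i+1}. *)
Definition Phi_term (d : nat -> nat) (i : nat) : R :=
  - (2 ^ (d i) / 3 ^ (S i)).

(* Main.v *)
Require Import Defs.
From Stdlib Require Import Reals Lra Lia Wf_nat Arith Classical ClassicalEpsilon.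
From Coquelicot Require Import Coquelicot.
Open Scope R_scope.

Section S.
Variable v : nat -> bool.

Lemma inf_ones : aperiodic v -> forall N, exists m, (N <= m)%nat /\ v m = true.
Proof.
  intros Ha N. apply NNPP; intro Hn. apply Ha. exists 1%nat, N. split; [lia|].
  intros n Hn'. assert (Hf : forall m, (N <= m)%nat -> v m = false).
  { intros m Hm. destruct (v m) eqn:E; auto. exfalso; apply Hn; eauto. }
  rewrite !Hf; auto; lia.
Qed.

Lemma least_one : aperiodic v -> forall N, exists m, (N <= m)%nat /\ v m = true /\
   forall k, (N <= k < m)%nat -> v k = false.
Proof.
  intros Ha N.
  destruct (dec_inh_nat_subset_has_unique_least_element
     (fun m => (N <= m)%nat /\ v m = true)) as [m [[[H1 H2] H3] _]].
  - intro n. destruct (le_lt_dec N n); destruct (v n) eqn:E.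
    + left; auto.
    + right; intros [_ Hc]; discriminate.
    + right; intros [Hc _]; lia.
    + right; intros [Hc _]; lia.
  - apply inf_ones; auto.
  - exists m. repeat split; auto. intros k Hk. destruct (v k) eqn:E; auto.
    assert (m <= k)%nat by (apply H3; split; auto; lia). lia.
Qed.

Lemma h_zeros : forall a k, (forall j, (a <= j < a + k)%nat -> v j = false) ->
  h v (a + k) = h v a.
Proof.
  intros a k; induction k; intros H.
  - f_equal; lia.
  - replace (a + S k)%nat with (S (a + k)) by lia. simpl.
    rewrite H by lia. rewrite IHk; [lia|]. intros; apply H; lia.
Qed.

Lemma pow_r_le1 : forall r k, 0 <= r <= 1 -> r ^ k <= 1.
Proof. intros r k Hr; induction k; simpl; [lra|].
  rewrite <- (Rmult_1_r 1). apply Rmult_le_compat; try lra. apply pow_le; lra. Qed.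
End S.

Theorem lemma23 (v : nat -> bool) :
  aperiodic v ->
  Rbar_lt (Finite (ln 2 / ln 3))
          (LimInf_seq (fun l : nat => INR (h v l) / INR l)) ->
  exists d : nat -> nat, enumerates_ones v d /\
    exists L : R, is_series (Phi_term d) L /\ L < -1.
Proof.
  intros Ha Hlim.
  set (nxt := fun N => proj1_sig (constructive_indefinite_description _ (least_one v Ha N))).
  assert (Hnxt : forall N, (N <= nxt N)%nat /\ v (nxt N) = true /\
      forall k, (N <= k < nxt N)%nat -> v k = false).
  { intro N. unfold nxt. destruct (constructive_indefinite_description _ _); simpl; auto. }
  set (d := fix d i := match i with O => nxt O | S i => nxt (S (d i)) end).
  assert (Hinc : forall i, (d i < d (S i))%nat).
  { intro i. simpl. destruct (Hnxt (S (d i))) as [H _]. lia. }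
  assert (Hdge : forall i, (i <= d i)%nat).
  { induction i; [lia|]. specialize (Hinc i). lia. }
  assert (Hone : forall i, v (d i) = true).
  { destruct i; simpl; apply Hnxt. }
  assert (Hgap0 : forall n, (n < d 0)%nat -> v n = false).
  { intros n Hn. apply (Hnxt 0%nat). simpl in Hn. lia. }
  assert (HgapS : forall i n, (d i < n < d (S i))%nat -> v n = false).
  { intros i n Hn. apply (Hnxt (S (d i))). simpl in Hn. lia. }
  assert (Henum : enumerates_ones v d).
  { split; auto. intro n. split.
    - intro Hv.
      assert (P : forall i n, (n <= d i)%nat -> v n = true -> exists j, d j = n).
      { induction i; intros m Hm Hvm.
        - destruct (Nat.eq_dec m (d 0%nat)) as [->|]; [eauto|].
          rewrite Hgap0 in Hvm by lia; discriminate.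
        - destruct (le_lt_dec m (d i)); [eauto|].
          destruct (Nat.eq_dec m (d (S i))) as [->|]; [eauto|].
          rewrite (HgapS i m) in Hvm by lia; discriminate. }
      apply (P n n); auto.
    - intros [i <-]; auto. }
  assert (Hh : forall i, h v (S (d i)) = S i).
  { induction i.
    - change (h v (S (d 0%nat))) with (h v (d 0%nat) + (if v (d 0%nat) then 1 else 0))%nat. rewrite Hone.
      pose proof (h_zeros v 0%nat (d 0%nat)) as Hz. rewrite Nat.add_0_l in Hz. rewrite Hz; [reflexivity|].
      intros; apply Hgap0; lia.
    - change (h v (S (d (S i)))) with (h v (d (S i)) + (if v (d (S i)) then 1 else 0))%nat.
      rewrite Hone. specialize (Hinc i).
      pose proof (h_zeros v (S (d i)) (d (S i) - S (d i))) as Hz.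
      replace (S (d i) + (d (S i) - S (d i)))%nat with (d (S i)) in Hz by lia.
      rewrite Hz; [lia|]. intros j Hj. apply (HgapS i); lia. }
  assert (Hdens : exists c, ln 2 / ln 3 < c /\ exists N, forall l, (N <= l)%nat ->
            c < INR (h v l) / INR l).
  { revert Hlim. unfold LimInf_seq.
    destruct (ex_LimInf_seq (fun l : nat => INR (h v l) / INR l)) as [l Hl]; simpl.
    destruct l as [l0| |]; simpl; intro Hlt; try contradiction.
    - assert (Hp : 0 < (l0 - ln 2 / ln 3) / 2) by lra.
      destruct (Hl (mkposreal _ Hp)) as [_ [N HN]]. simpl in HN.
      exists (l0 - (l0 - ln 2 / ln 3) / 2). split; [lra|]. eauto.
    - destruct (Hl (ln 2 / ln 3 + 1)) as [N HN]. exists (ln 2 / ln 3 + 1). split; [lra|eauto]. }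
  destruct Hdens as [c [Hc [N HN]]].
  assert (Hln3 : 0 < ln 3) by (rewrite <- ln_1; apply ln_increasing; lra).
  set (b := Rpower 3 c).
  assert (Hb : 2 < b).
  { unfold b, Rpower. rewrite <- (exp_ln 2) by lra. apply exp_increasing.
    apply Rmult_lt_reg_r with (/ ln 3). apply Rinv_0_lt_compat; auto.
    rewrite Rmult_assoc, Rinv_r by lra. rewrite Rmult_1_r. exact Hc. }
  set (r := 2 / b).
  assert (Hr : 0 < r < 1).
  { unfold r. split. apply Rdiv_lt_0_compat; lra.
    apply Rmult_lt_reg_r with b; [lra|]. unfold Rdiv; rewrite Rmult_assoc, Rinv_l by lra. lra. }
  set (p := fun i => 2 ^ (d i) / 3 ^ (S i)).
  assert (Hpb : forall i, (N <= i)%nat -> p i <= r ^ i).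
  { intros i Hi.
    pose proof (HN (S (d i)) ltac:(specialize (Hdge i); lia)) as H1.
    rewrite Hh in H1.
    assert (H2 : c * INR (S (d i)) < INR (S i)).
    { apply Rmult_lt_reg_r with (/ INR (S (d i))).
      apply Rinv_0_lt_compat, lt_0_INR; lia.
      rewrite Rmult_assoc, Rinv_r by (apply not_0_INR; lia). lra. }
    assert (H3 : b ^ (S (d i)) < 3 ^ (S i)).
    { unfold b. rewrite <- Rpower_pow by (unfold Rpower; apply exp_pos).
      rewrite Rpower_mult, <- Rpower_pow by lra. apply Rpower_lt; lra. }
    assert (H4 : b ^ (d i) <= b ^ (S (d i))) by (apply Rle_pow; [lra|lia]).
    assert (H5 : r ^ (d i) <= r ^ i).
    { replace (d i) with (i + (d i - i))%nat by (specialize (Hdge i); lia).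
      rewrite pow_add. rewrite <- (Rmult_1_r (r ^ i)) at 2.
      apply Rmult_le_compat_l. apply pow_le; lra.
      apply pow_r_le1; lra. }
    apply Rle_trans with (r ^ (d i)); auto.
    unfold p, r. unfold Rdiv. rewrite Rpow_mult_distr, pow_inv.
    apply Rmult_le_compat_l. apply pow_le; lra.
    apply Rinv_le_contravar. apply pow_lt; lra. lra. }
  assert (Hp0 : forall i, 0 <= p i).
  { intro i; unfold p. apply Rdiv_le_0_compat; apply pow_le || apply pow_lt; lra. }
  assert (Hexp : ex_series p).
  { apply (ex_series_incr_n p N).
    apply (@ex_series_le R_AbsRing R_CompleteNormedModule _ (fun k => r ^ N * r ^ k)).
    - intro k. change (norm (p (N + k)%nat)) with (Rabs (p (N + k)%nat)).
      rewrite Rabs_pos_eq by auto. rewrite <- pow_add. apply Hpb; lia.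
    - apply (ex_series_scal_l (r ^ N) (fun k => r ^ k)). apply ex_series_geom.
      rewrite Rabs_pos_eq; lra. }
  exists d. split; auto.
  exists (- Series p). split.
  { pose proof (@is_series_opp R_AbsRing R_NormedModule p (Series p) (Series_correct _ Hexp)) as Ho.
    eapply is_series_ext; [|exact Ho]. intro n; reflexivity. }
  set (g := fun i => 2 ^ i / 3 ^ (S i)).
  assert (Hg : is_series g 1).
  { assert (Hgeo : is_series (fun n => (2/3) ^ n) (/ (1 - 2/3))).
    { apply is_series_geom. rewrite Rabs_pos_eq; lra. }
    pose proof (@is_series_scal R_AbsRing R_NormedModule (/3) _ _ Hgeo) as Hs.
    replace 1 with (scal (/3) (/ (1 - 2/3))) by (unfold scal; simpl; unfold mult; simpl; field).
    eapply is_series_ext; [|exact Hs].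
    intro n. unfold g, scal; simpl. unfold mult; simpl. unfold Rdiv.
    rewrite Rpow_mult_distr, pow_inv. field. apply pow_nonzero; lra. }
  assert (Hexg : ex_series g) by (eexists; eauto).
  assert (Hn0 : exists n0, (n0 < d n0)%nat).
  { apply NNPP; intro Hnc. apply Ha. exists 1%nat, 0%nat. split; [lia|].
    assert (Hid : forall i, d i = i).
    { intro i. specialize (Hdge i). destruct (Nat.eq_dec (d i) i); auto.
      exfalso; apply Hnc; exists i; lia. }
    intros n _. rewrite <- (Hid (n + 1)%nat), <- (Hid n), !Hone. reflexivity. }
  destruct Hn0 as [n0 Hn0].
  set (e := fun i => p i - g i).
  assert (He0 : forall i, 0 <= e i).
  { intro i. unfold e, p, g. unfold Rdiv. apply Rge_le, Rge_minus, Rle_ge.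
    apply Rmult_le_compat_r. left; apply Rinv_0_lt_compat, pow_lt; lra.
    apply Rle_pow; [lra|auto]. }
  assert (Hen0 : 0 < e n0).
  { unfold e, p, g. unfold Rdiv. apply Rgt_minus.
    apply Rmult_lt_compat_r. apply Rinv_0_lt_compat, pow_lt; lra.
    apply Rlt_pow; [lra|auto]. }
  assert (Hexe : ex_series e) by (apply (ex_series_minus p g); auto).
  assert (HSe : Series e = Series p - 1).
  { unfold e. rewrite Series_minus; auto. rewrite (is_series_unique g 1); auto. }
  assert (Hpos : 0 < Series e).
  { rewrite (Series_incr_n e (S n0)) by (auto; lia). simpl pred.
    assert (Htail : 0 <= Series (fun k => e (S n0 + k)%nat)).
    { replace 0 with (Series (fun k => 0 * e (S n0 + k)%nat)).
      apply Series_le. intro n; split. lra. rewrite Rmult_0_l; auto.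
      apply (ex_series_incr_n e (S n0)); auto.
      rewrite Series_scal_l; ring. }
    destruct n0.
    - change (sum_f_R0 e 0) with (e 0%nat). lra.
    - change (sum_f_R0 e (S n0)) with (sum_f_R0 e n0 + e (S n0)). pose proof (cond_pos_sum e n0 He0). lra. }
  lra.
Qed.
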